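(* For all integers $m\geq 3$ and $n\geq 3$, $1\leq \gamma_{sR}(C_m\vee C_n)\leq 4$.
   Context: $C_n$ denotes the cycle on $n$ vertices. For a graph $G=(V,E)$ and $x\in V$, $N_G[x]=\{x\}\cup\{y: xy\in E\}$. A signed Roman dominating function (SRDF) on $G$ is a function $f:V\to\{-1,1,2\}$ such that (a) $\sum_{y\in N_G[x]}f(y)\geq 1$ for every $x\in V$, and (b) every vertex $x$ with $f(x)=-1$ is adjacent to at least one vertex $y$ with $f(y)=2$. The weight of $f$ is $\sum_{x\in V}f(x)$, and $\gamma_{sR}(G)$ is the minimum weight of an SRDF on $G$. The join $G_1\vee G_2$ of two graphs has vertex set $V(G_1)\cup V(G_2)$ (disjoint union) and edge set $E(G_1)\cup E(G_2)\cup\{uv: u\in V(G_1), v\in V(G_2)\}$. *)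

(* Defs.v *)
From mathcomp Require Import all_boot all_order all_algebra.
Set Implicit Arguments. Unset Strict Implicit. Unset Printing Implicit Defensive.
Import Order.TTheory GRing.Theory Num.Theory.
Local Open Scope ring_scope.

Record sgraph := SGraph {
  vtx : finType;
  adj : rel vtx;
  adj_sym : symmetric adj;
  adj_irr : irreflexive adj }.

Definition closed_nbhd (G : sgraph) (x : vtx G) : {set vtx G} :=
  [set y | (y == x) || adj x y].

(* A function f : V -> {-1,1,2}, encoded as a finite function into 'I_3,
   with 0 |-> -1, 1 |-> 1, 2 |-> 2. *)
Definition lab (k : 'I_3) : int :=
  if val k == 0%N then -1 else if val k == 1%N then 1 else 2.

Definition fval (G : sgraph) (f : {ffun vtx G -> 'I_3}) (x : vtx G) : int :=
  lab (f x).

Definition is_SRDF (G : sgraph) (f : {ffun vtx G -> 'I_3}) : bool :=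
  [forall x, (1 <= \sum_(y in closed_nbhd x) fval f y)%R] &&
  [forall x, (fval f x == -1) ==> [exists y, adj x y && (fval f y == 2)]].

Definition weight (G : sgraph) (f : {ffun vtx G -> 'I_3}) : int :=
  \sum_(x : vtx G) fval f x.

Definition one_fun (G : sgraph) : {ffun vtx G -> 'I_3} :=
  [ffun _ => inord 1].

(* gamma_sR(G): minimum weight of an SRDF (minimum over the finite set of
   SRDFs; the set is nonempty as the constant 1 function is an SRDF,
   and the arg-min takes that as its default witness). *)
Definition gamma_sR (G : sgraph) : int :=
  weight (Order.arg_min (one_fun G) (fun f => is_SRDF f) (@weight G)).

Definition cycle_adj (n : nat) : rel 'I_n :=
  fun i j => (i != j) &&
    ((val j == (val i).+1 %% n)%N || (val i == (val j).+1 %% n)%N).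

Lemma cycle_adj_sym n : symmetric (@cycle_adj n).
Proof. by move=> i j; rewrite /cycle_adj eq_sym orbC. Qed.

Lemma cycle_adj_irr n : irreflexive (@cycle_adj n).
Proof. by move=> i; rewrite /cycle_adj eqxx. Qed.

Definition Cycle (n : nat) : sgraph :=
  @SGraph 'I_n (@cycle_adj n) (@cycle_adj_sym n) (@cycle_adj_irr n).

Definition join_adj (G1 G2 : sgraph) : rel (vtx G1 + vtx G2) :=
  fun u v => match u, v with
  | inl a, inl b => adj a b
  | inr a, inr b => adj a b
  | _, _ => true
  end.

Lemma join_adj_sym G1 G2 : symmetric (@join_adj G1 G2).
Proof. by case=> a [] b //=; apply: adj_sym. Qed.

Lemma join_adj_irr G1 G2 : irreflexive (@join_adj G1 G2).
Proof. by case=> a /=; apply: adj_irr. Qed.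

Definition join (G1 G2 : sgraph) : sgraph :=
  @SGraph (vtx G1 + vtx G2)%type (@join_adj G1 G2)
    (@join_adj_sym G1 G2) (@join_adj_irr G1 G2).

(* Main.v *)
Require Import Defs.
From mathcomp Require Import all_boot all_order all_algebra.
From mathcomp Require Import zify ring lra.
Set Implicit Arguments. Unset Strict Implicit. Unset Printing Implicit Defensive.
Import Order.TTheory GRing.Theory Num.Theory.
Local Open Scope ring_scope.
Lemma succ_mod (i m : nat) : (i < m)%N -> (i.+1 %% m = if i.+1 == m then 0 else i.+1)%N.
Proof. move=> lt; case: eqP => [->|h]; first by rewrite modnn. by rewrite modn_small //; lia. Qed.

Lemma valS m (u : 'I_m) : val (ordS u) = (if u.+1 == m then 0 else u.+1)%N.
Proof. by rewrite /= succ_mod. Qed.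

Lemma valPr m (u : 'I_m) : val (ord_pred u) = (if val u == 0 then m.-1 else (val u).-1)%N.
Proof.
have := congr1 val (ord_predK u); rewrite valS.
have := ltn_ord (ord_pred u); have := ltn_ord u.
case: eqP => h1; case: eqP => h2; simpl in *; lia.
Qed.

Lemma cyc_adjE m (u v : 'I_m) : cycle_adj u v = (u != v) && ((v == ordS u) || (v == ord_pred u)).
Proof.
rewrite /cycle_adj.
have -> : (val v == (val u).+1 %% m)%N = (v == ordS u) by rewrite -val_eqE.
have -> : (val u == (val v).+1 %% m)%N = (u == ordS v) by rewrite -val_eqE.
have -> : (u == ordS v) = (v == ord_pred u) by rewrite -[RHS](inj_eq (@ordS_inj m)) ord_predK eq_sym.
by [].
Qed.

Ltac natsolve := repeat (case: ifP => /eqP ?); simpl in *; lia.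

Lemma ordS_neq m (u : 'I_m) : (3 <= m)%N -> ordS u != u.
Proof. move=> hm; have l := ltn_ord u; rewrite -val_eqE valS; apply/negP => /eqP; natsolve. Qed.

Lemma ord_pred_neq m (u : 'I_m) : (3 <= m)%N -> ord_pred u != u.
Proof. move=> hm; have l := ltn_ord u; rewrite -val_eqE valPr; apply/negP => /eqP; natsolve. Qed.

Lemma ordS_pred_neq m (u : 'I_m) : (3 <= m)%N -> ordS u != ord_pred u.
Proof. move=> hm; have l := ltn_ord u; rewrite -val_eqE valPr valS; apply/negP => /eqP; natsolve. Qed.

Lemma cyc_sum m (hm : (3 <= m)%N) (u : 'I_m) (F : 'I_m -> int) :
  \sum_(v : 'I_m) (if (v == u) || cycle_adj u v then F v else 0) = F u + F (ordS u) + F (ord_pred u).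
Proof.
rewrite (bigD1 u) //= eqxx /=.
rewrite (bigD1 (ordS u)) /=; last by rewrite ordS_neq.
rewrite (bigD1 (ord_pred u)) /=; last by rewrite ord_pred_neq // eq_sym ordS_pred_neq.
rewrite big1 ?addr0.
  rewrite (negbTE (ordS_neq _ hm)) (negbTE (ord_pred_neq _ hm)) /= !cyc_adjE !eqxx /= orbT.
  by rewrite eq_sym (ordS_neq _ hm) eq_sym (ord_pred_neq _ hm) addrA.
move=> v /andP[/andP [h1 h2] h3]; rewrite cyc_adjE (negbTE h1) (negbTE h2) (negbTE h3) /=.
by rewrite andbF.
Qed.


Lemma nbhd_l m n (hm : (3 <= m)%N) (h : vtx (join (Cycle m) (Cycle n)) -> int) (u : 'I_m) :
  \sum_(y in closed_nbhd (inl u : vtx (join (Cycle m) (Cycle n)))) h y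
  = h (inl u) + h (inl (ordS u)) + h (inl (ord_pred u)) + \sum_(v : 'I_n) h (inr v).
Proof.
rewrite big_mkcond big_sumType /=.
under eq_bigr => i _ do rewrite in_set /=.
rewrite (cyc_sum hm u (fun v => h (inl v))).
congr (_ + _).
by apply: eq_bigr => i _; rewrite in_set /=.
Qed.

Lemma nbhd_r m n (hn : (3 <= n)%N) (h : vtx (join (Cycle m) (Cycle n)) -> int) (u : 'I_n) :
  \sum_(y in closed_nbhd (inr u : vtx (join (Cycle m) (Cycle n)))) h y
  = h (inr u) + h (inr (ordS u)) + h (inr (ord_pred u)) + \sum_(v : 'I_m) h (inl v).
Proof.
rewrite big_mkcond big_sumType /= addrC.
under [X in X + _]eq_bigr => i _ do rewrite in_set /=.
rewrite (cyc_sum hn u (fun v => h (inr v))).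
congr (_ + _).
by apply: eq_bigr => i _; rewrite in_set /=.
Qed.

Lemma weight_join m n (f : {ffun vtx (join (Cycle m) (Cycle n)) -> 'I_3}) :
  weight f = \sum_(u : 'I_m) fval f (inl u) + \sum_(v : 'I_n) fval f (inr v).
Proof. by rewrite /weight big_sumType. Qed.


Lemma arith1 (M A B : int) : 3 <= M -> M <= A *+ 3 + M * B -> A + B < 1 -> 0 < A -> False.
Proof.
move=> hM H1 hab ha.
have e1 : M * B <= M * (- A) by apply: ler_wpM2l; lia.
have e2 : 3 * A <= M * A by apply: ler_wpM2r; lia.
lra.
Qed.

Lemma natge3 (m : nat) : (3 <= m)%N -> (3 : int) <= m%:R.
Proof. move=> h. by rewrite ler_nat. Qed.

Lemma sum_cyc m (hm : (3 <= m)%N) (F : 'I_m -> int) (B : int) (H : forall u, 1 <= F u + F (ordS u) + F (ord_pred u) + B) :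
  m%:R <= (\sum_u F u) *+ 3 + m%:R * B.
Proof.
have S1 : \sum_(u:'I_m) (1:int) <= \sum_(u:'I_m) (F u + F (ordS u) + F (ord_pred u) + B).
  by apply: ler_sum => u _; exact: H.
have eS : \sum_(u:'I_m) F (ordS u) = \sum_u F u.
  by symmetry; rewrite (reindex_inj (@ordS_inj m)).
have eP : \sum_(u:'I_m) F (ord_pred u) = \sum_u F u.
  by symmetry; rewrite (reindex_inj (@ord_pred_inj m)).
move: S1; rewrite sumr_const card_ord !big_split /= sumr_const card_ord eS eP.
rewrite -mulr_natl => S1. lra.
Qed.

Lemma lower m n (hm : (3 <= m)%N) (hn : (3 <= n)%N) (f : {ffun vtx (join (Cycle m) (Cycle n)) -> 'I_3}) :
  is_SRDF f -> 1 <= weight f.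
Proof.
move=> /andP[/forallP H _].
rewrite weight_join.
have H1 : m%:R <= (\sum_(u:'I_m) fval f (inl u)) *+ 3 + m%:R * \sum_(v : 'I_n) fval f (inr v).
  by apply: sum_cyc => // u; rewrite -(nbhd_l hm (fval f) u); exact: H.
have H2 : n%:R <= (\sum_(v:'I_n) fval f (inr v)) *+ 3 + n%:R * \sum_(u : 'I_m) fval f (inl u).
  by apply: sum_cyc => // u; rewrite -(nbhd_r hn (fval f) u); exact: H.
move: H1 H2; set A := \sum_(u:'I_m) _; set B := \sum_(v:'I_n) _ => H1 H2.
have hM := natge3 hm; have hN := natge3 hn.
case: (lerP 1 (A+B)) => // hab; exfalso.
case: (ltrP 0 A) => ha; first exact: (arith1 hM H1 hab ha).
case: (ltrP 0 B) => hb; first by apply: (arith1 hN H2 _ hb); rewrite addrC.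
have : m%:R * B <= 0 by apply: mulr_ge0_le0 => //; lra.
lra.
Qed.


Definition Gv (m i : nat) : int :=
  if (m %% 3 == 0)%N && (i == m.-1) then 1 else if (i %% 3 == 0)%N then 2 else -1.

Definition code (m i : nat) : 'I_3 :=
  inord (if (m %% 3 == 0)%N && (i == m.-1) then 1 else if (i %% 3 == 0)%N then 2 else 0)%N.

Lemma lab_code m i : lab (code m i) = Gv m i.
Proof. by rewrite /code /Gv; case: (_ && _); [|case: (_ %% 3 == 0)%N]; rewrite /lab /= inordK. Qed.

Lemma Gv_ge m i : -1 <= Gv m i.
Proof. by rewrite /Gv; case: ifP => _; [|case: ifP => _]. Qed.

Lemma Gv_two m i : (i %% 3 = 0)%N -> ~ ((m %% 3 = 0)%N /\ i = m.-1) -> Gv m i = 2.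
Proof.
move=> h1 h2; rewrite /Gv; case: ifP => [/andP[/eqP a /eqP b]|_]; first by exfalso; apply: h2.
by rewrite h1.
Qed.

Lemma loc_nat m i : (3 <= m)%N -> (i < m)%N ->
  0 <= Gv m i + Gv m (if i.+1 == m then 0 else i.+1)%N + Gv m (if i == 0 then m.-1 else i.-1)%N.
Proof.
move=> hm hi.
have g := Gv_ge m.
have t := @Gv_two m.
case: eqP => h1; case: eqP => h2.
- lia.
- have := t 0%N (erefl _) ltac:(lia). have := g i; have := g i.-1. lra.
- have := t 0%N (erefl _) ltac:(lia). have := g i.+1; have := g m.-1. subst i. lra.
- have := g i; have := g i.+1; have := g i.-1.
  have [k|[k|k]] : (i %% 3 = 0 \/ i.+1 %% 3 = 0 \/ i.-1 %% 3 = 0)%N by lia.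
  + have := t i k ltac:(lia). lra.
  + have := t i.+1 k ltac:(lia). lra.
  + have := t i.-1 k ltac:(lia). lra.
Qed.

Lemma Gv_loc m (hm : (3 <= m)%N) (u : 'I_m) :
  0 <= Gv m u + Gv m (ordS u) + Gv m (ord_pred u).
Proof.
have e1 : nat_of_ord (ordS u) = (if u.+1 == m then 0 else u.+1)%N := valS u.
have e2 : nat_of_ord (ord_pred u) = (if nat_of_ord u == 0 then m.-1 else u.-1)%N := valPr u.
by rewrite e1 e2; apply: loc_nat.
Qed.

Definition base (i : nat) : int := if (i %% 3 == 0)%N then 2 else -1.

Lemma S_base k : \sum_(i < k) base i = if (k %% 3 == 0)%N then 0 else if (k %% 3 == 1)%N then 2 else 1.
Proof.
elim: k => [|k IH]; first by rewrite big_ord0.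
rewrite big_ord_recr /= IH /base.
repeat (case: ifP => /eqP ?); lia.
Qed.

Lemma Gv_total m (hm : (3 <= m)%N) : 1 <= \sum_(u : 'I_m) Gv m u <= 2.
Proof.
case: m hm => // m' hm.
rewrite big_ord_recr /=.
have -> : \sum_(i < m') Gv m'.+1 i = \sum_(i < m') base i.
  apply: eq_bigr => i _; rewrite /Gv /base /=.
  by rewrite (_ : (nat_of_ord i == m') = false) ?andbF // ltn_eqF.
rewrite S_base /Gv /= eqxx andbT.
repeat (case: ifP => /eqP ?); lia.
Qed.


Lemma one_SRDF (G : sgraph) : is_SRDF (Defs.one_fun G).
Proof.
have e : forall y, fval (Defs.one_fun G) y = 1 by move=> y; rewrite /fval ffunE /lab /= inordK.
apply/andP; split; apply/forallP => x.
  rewrite (bigD1 x) /=; last by rewrite in_set eqxx.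
  rewrite e lerDl; apply: sumr_ge0 => y _; by rewrite e.
by rewrite e.
Qed.

Definition Fj m n : {ffun vtx (join (Cycle m) (Cycle n)) -> 'I_3} :=
  [ffun x : ('I_m + 'I_n)%type => match x with inl u => code m (nat_of_ord u) | inr v => code n (nat_of_ord v) end].

Lemma Fl m n u : fval (Fj m n) (inl u) = Gv m u.
Proof. by rewrite /fval ffunE lab_code. Qed.
Lemma Fr m n v : fval (Fj m n) (inr v) = Gv n v.
Proof. by rewrite /fval ffunE lab_code. Qed.

Lemma Gv0 m : (3 <= m)%N -> Gv m 0 = 2.
Proof. move=> hm; apply: Gv_two => //; lia. Qed.

Lemma Fj_SRDF m n (hm : (3 <= m)%N) (hn : (3 <= n)%N) : is_SRDF (Fj m n).
Proof.
have tm := Gv_total hm; have tn := Gv_total hn.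
apply/andP; split; apply/forallP => -[u|v].
- rewrite nbhd_l // !Fl.
  under eq_bigr => v _ do rewrite Fr.
  have := Gv_loc hm u. move: tn => /andP[]. lra.
- rewrite nbhd_r // !Fr.
  under eq_bigr => w _ do rewrite Fl.
  have := Gv_loc hn v. move: tm => /andP[]. lra.
- apply/implyP => _; apply/existsP.
  exists (inr (Ordinal (leq_trans (isT : (0 < 3)%N) hn))).
  by rewrite /= Fr /= Gv0.
- apply/implyP => _; apply/existsP.
  exists (inl (Ordinal (leq_trans (isT : (0 < 3)%N) hm))).
  by rewrite /= Fl /= Gv0.
Qed.

Lemma Fj_weight m n (hm : (3 <= m)%N) (hn : (3 <= n)%N) : weight (Fj m n) <= 4.
Proof.
rewrite weight_join.
under eq_bigr => u _ do rewrite Fl.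
under [X in _ + X]eq_bigr => u _ do rewrite Fr.
have := Gv_total hm; have := Gv_total hn => /andP[? ?] /andP[? ?]; lra.
Qed.

Theorem mainTheorem5 (m n : nat) (hm : (3 <= m)%N) (hn : (3 <= n)%N) :
  1 <= gamma_sR (join (Cycle m) (Cycle n)) <= 4.
Proof.
rewrite /gamma_sR.
case: (arg_minP (@weight _) (one_SRDF (join (Cycle m) (Cycle n)))) => g Sg Hmin.
apply/andP; split; first exact: lower.
apply: le_trans (Fj_weight hm hn).
exact: Hmin (Fj_SRDF hm hn).
Qed.
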